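(* Let $f:A\to B$ be a map of simplicial objects in non-negatively graded complexes of abelian groups. Suppose: (a) for every $n$, $f_n:A_n\to B_n$ is a quasi-isomorphism; (b) for every simplicial set $S$, the map $f(S):A(S)\to B(S)$ is surjective; (c) for every degree $d$, the simplicial abelian groups $A^d$ and $B^d$ are contractible. Then for every injective map $\alpha:S\to T$ of simplicial sets, the induced map $$A(T)\to A(S)\times_{B(S)}B(T)$$ is a surjective quasi-isomorphism.
   Context: For a simplicial complex of abelian groups $A$ (equivalently, a complex of simplicial abelian groups $A^d$) and a simplicial set $S$, $A(S)$ is the complex with $A(S)^d=\mathrm{Hom}_{\mathrm{sSet}}(S,A^d)$; thus $A(\Delta^n)=A_n$ and $A(-)$ sends colimits of simplicial sets to limits. A simplicial abelian group is contractible if it is weakly equivalent to a point (all homotopy groups vanish). *)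

(* Defs.v *)
From HB Require Import structures.
From mathcomp Require Import all_boot all_order all_algebra.
Set Implicit Arguments. Unset Strict Implicit. Unset Printing Implicit Defensive.
Import GRing.Theory.
Local Open Scope ring_scope.

(** * The simplex category Delta: maps [m] -> [n] are monotone maps
      'I_m.+1 -> 'I_n.+1 *)
Definition monob (m n : nat) (f : {ffun 'I_m.+1 -> 'I_n.+1}) : bool :=
  [forall i : 'I_m.+1, forall j : 'I_m.+1, ((i <= j)%N ==> (f i <= f j)%N)].

Definition Dmap (m n : nat) := {f : {ffun 'I_m.+1 -> 'I_n.+1} | monob f}.

Lemma monob_id n : monob [ffun j : 'I_n.+1 => j].
Proof. by apply/forallP=> i; apply/forallP=> j; rewrite !ffunE; apply/implyP. Qed.

Definition did n : Dmap n n := exist (@monob n n) _ (monob_id n).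

Lemma monob_comp l m n (f : Dmap l m) (g : Dmap m n) :
  monob [ffun j => sval g (sval f j)].
Proof.
case: f g => [f hf] [g hg]; apply/forallP=> i; apply/forallP=> j; apply/implyP=> hij.
rewrite !ffunE /=.
have h1 := implyP (forallP (forallP hf i) j) hij.
exact: (implyP (forallP (forallP hg _) _) h1).
Qed.

Definition dcomp l m n (g : Dmap m n) (f : Dmap l m) : Dmap l n :=
  exist (@monob l n) _ (monob_comp f g).

Lemma monob_face k (i : 'I_k.+2) : monob [ffun j : 'I_k.+1 => lift i j].
Proof.
apply/forallP=> a; apply/forallP=> b; apply/implyP=> h.
by rewrite !ffunE /= leq_bump2.
Qed.

Definition face k (i : 'I_k.+2) : Dmap k k.+1 := exist (@monob k k.+1) _ (monob_face i).

Unset Implicit Arguments.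
Record sset := SSet {
  sob :> nat -> Type;
  sact : forall m n, Dmap m n -> sob n -> sob m;
  sact_id : forall n x, sact n n (did n) x = x;
  sact_comp : forall l m n (g : Dmap m n) (f : Dmap l m) x,
      sact l n (dcomp g f) x = sact l m f (sact m n g x) }.

Record smap (S T : sset) := SMap {
  smf :> forall n, S n -> T n;
  smf_nat : forall m n (f : Dmap m n) x,
      smf m (sact S m n f x) = sact T m n f (smf n x) }.

Definition sinjective (S T : sset) (a : smap S T) := forall n, injective (a n).

(** * Simplicial objects in non-negatively graded cochain complexes of abelian
      groups: cob d n = A^d_n; cdif : A^d -> A^{d+1} *)
Record scx := SCx {
  cob : nat -> nat -> zmodType;
  cact : forall d m n, Dmap m n -> cob d n -> cob d m;
  cact_sub : forall d m n (f : Dmap m n) x y,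
      cact d m n f (x - y) = cact d m n f x - cact d m n f y;
  cact_id : forall d n x, cact d n n (did n) x = x;
  cact_comp : forall d l m n (g : Dmap m n) (f : Dmap l m) x,
      cact d l n (dcomp g f) x = cact d l m f (cact d m n g x);
  cdif : forall d n, cob d n -> cob d.+1 n;
  cdif_sub : forall d n (x y : cob d n), cdif d n (x - y) = cdif d n x - cdif d n y;
  cdif_nat : forall d m n (f : Dmap m n) x, cdif d m (cact d m n f x) = cact d.+1 m n f (cdif d n x);
  cdif2 : forall d n x, cdif d.+1 n (cdif d n x) = 0 }.

Record scmap (A B : scx) := SCMap {
  scf :> forall d n, cob A d n -> cob B d n;
  scf_sub : forall d n x y, scf d n (x - y) = scf d n x - scf d n y;
  scf_nat : forall d m n (f : Dmap m n) x,
      scf d m (cact A d m n f x) = cact B d m n f (scf d n x);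
  scf_dif : forall d n x, scf d.+1 n (cdif A d n x) = cdif B d n (scf d n x) }.

Set Implicit Arguments.
(** * Abstract cochain complexes, with elements presented by a carrier,
      a membership predicate and an equality (pointwise) relation *)
Record pcx := PCx {
  pc : nat -> Type;
  pin : forall d, pc d -> Prop;
  peq : forall d, pc d -> pc d -> Prop;
  pzero : forall d, pc d;
  psub : forall d, pc d -> pc d -> pc d;
  pdif : forall d, pc d -> pc d.+1 }.

Definition pcycle (C : pcx) d (x : pc C d) :=
  pin x /\ peq (pdif x) (pzero C d.+1).

Definition pbdry (C : pcx) : forall d, pc C d -> Prop :=
  fun d => match d return pc C d -> Prop with
  | 0%N => fun x => peq x (pzero C 0)
  | d'.+1 => fun x => exists y : pc C d', pin y /\ peq (pdif y) x
  end.

(** g (assumed a chain map) induces an isomorphism on cohomology *)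
Definition quasi_iso (C D : pcx) (g : forall d, pc C d -> pc D d) :=
  (forall d (x : pc C d), pcycle x -> pbdry (g d x) -> pbdry x) /\
  (forall d (y : pc D d), pcycle y ->
     exists x : pc C d, pcycle x /\ pbdry (psub (g d x) y)).

Definition psurj (C D : pcx) (g : forall d, pc C d -> pc D d) :=
  forall d (y : pc D d), pin y -> exists x : pc C d, pin x /\ peq (g d x) y.

Definition level (A : scx) (n : nat) : pcx :=
  @PCx (fun d => cob A d n) (fun _ _ => True) (fun _ x y => x = y)
       (fun _ => 0) (fun _ x y => x - y) (fun d x => cdif A d n x).

Definition levelmap (A B : scx) (f : scmap A B) n :
  forall d, pc (level A n) d -> pc (level B n) d := fun d x => f d n x.

(** The complex A(S), A(S)^d = Hom_sSet(S, A^d) *)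
Definition cochain (A : scx) (S : sset) d := forall n, S n -> cob A d n.

Definition cnatural (A : scx) (S : sset) d (c : cochain A S d) :=
  forall m n (f : Dmap m n) x, c m (sact S m n f x) = cact A d m n f (c n x).

Definition ceq (A : scx) (S : sset) d (c c' : cochain A S d) :=
  forall n x, c n x = c' n x.

Definition ofS (A : scx) (S : sset) : pcx :=
  @PCx (cochain A S) (@cnatural A S) (@ceq A S)
       (fun d n x => 0) (fun d c c' n x => c n x - c' n x)
       (fun d c n x => cdif A d n (c n x)).

Definition ofSmap (A B : scx) (f : scmap A B) (S : sset) :
  forall d, pc (ofS A S) d -> pc (ofS B S) d :=
  fun d c n x => f d n (c n x).

Definition precomp (A : scx) (S T : sset) (a : smap S T) d (c : cochain A T d)
  : cochain A S d := fun n x => c n (smf S T a n x).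

Definition fibprod (A B : scx) (f : scmap A B) (S T : sset) (a : smap S T) : pcx :=
  @PCx (fun d => (cochain A S d * cochain B T d)%type)
       (fun d p => cnatural p.1 /\ cnatural p.2 /\
                   ceq (ofSmap f p.1) (precomp a p.2))
       (fun d p q => ceq p.1 q.1 /\ ceq p.2 q.2)
       (fun d => (fun n x => 0, fun n x => 0))
       (fun d p q => (fun n x => p.1 n x - q.1 n x, fun n x => p.2 n x - q.2 n x))
       (fun d p => (fun n x => cdif A d n (p.1 n x), fun n x => cdif B d n (p.2 n x))).

Definition gapmap (A B : scx) (f : scmap A B) (S T : sset) (a : smap S T) :
  forall d, pc (ofS A T) d -> pc (fibprod f a) d :=
  fun d c => (precomp a c, ofSmap f c).

(** * Contractible simplicial abelian groups: all homotopy groups vanish,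
      pi_k computed as homology of the normalized (Moore) complex
      N_k = cap_{i<k} ker d_i with differential d_k. *)
Definition nbdry (G : nat -> zmodType) (act : forall m n, Dmap m n -> G n -> G m)
  k (x : G k) :=
  exists y : G k.+1,
    (forall i : 'I_k.+2, (i < k.+1)%N -> act k k.+1 (face i) y = 0) /\
    act k k.+1 (face ord_max) y = x.

Definition contractible (G : nat -> zmodType)
  (act : forall m n, Dmap m n -> G n -> G m) :=
  (forall x : G 0%N, nbdry act x) /\
  (forall k (x : G k.+1),
     (forall i : 'I_k.+2, act k k.+1 (face i) x = 0) -> nbdry act x).

Definition scx_level_contractible (A : scx) (d : nat) :=
  contractible (fun m n f => cact A d m n f).

(* Main.v *)
Require Import Defs.
From mathcomp Require Import all_boot all_order all_algebra zify.
From Stdlib Require Import ClassicalEpsilon Classical.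


Set Implicit Arguments. Unset Strict Implicit. Unset Printing Implicit Defensive.
Import GRing.Theory.

Lemma dmap_eq m n (f g : Dmap m n) : (forall i, sval f i = sval g i) -> f = g.
Proof. move=> h; apply: val_inj; apply/ffunP => i; exact: h. Qed.

Definition df k i : Dmap k k.+1 := face (inord i).

Lemma df_val k i a : i <= k.+1 -> val (sval (df k i) a) = bump i a.
Proof. move=> h; rewrite /df /= ffunE /= inordK //. Qed.

Lemma monob_sdeg k (i : 'I_k.+1) : monob [ffun j : 'I_k.+2 => (inord (unbump i j) : 'I_k.+1)].
Proof.
apply/forallP=> a; apply/forallP=> b; apply/implyP=> h.
have hi := ltn_ord i; have ha := ltn_ord a; have hb := ltn_ord b.
rewrite !ffunE /= !inordK; rewrite /unbump; lia.
Qed.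

Definition sd k i : Dmap k.+1 k :=
  exist (@monob k.+1 k) _ (monob_sdeg (inord i : 'I_k.+1)).

Lemma sd_val k i a : i <= k -> val (sval (sd k i) a) = unbump i a.
Proof.
move=> h; rewrite /sd /= ffunE /= !inordK //; have := ltn_ord a; rewrite /unbump; lia.
Qed.

Ltac dsolve := apply: dmap_eq => a; apply: val_inj; rewrite /dcomp /did /= !ffunE /=;
  have ha := ltn_ord a; rewrite ?ffunE /= ?inordK; rewrite /bump /unbump; try lia.

Lemma I1 k i j : i < j -> j <= k.+2 ->
  dcomp (df k.+1 j) (df k i) = dcomp (df k.+1 i) (df k j.-1).
Proof. move=> hij hj; dsolve. Qed.

Lemma I2 k r : r <= k -> dcomp (sd k r) (df k r) = did k.
Proof. move=> hr; dsolve. Qed.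

Lemma I3 k i r : i < r -> r <= k.+1 ->
  dcomp (sd k.+1 r) (df k.+1 i) = dcomp (df k i) (sd k r.-1).
Proof. move=> hir hr; dsolve. Qed.

Definition dsurj m n (t : Dmap m n) := forall b, exists a, sval t a = b.

Lemma dmono m n (t : Dmap m n) (a b : 'I_m.+1) : a <= b -> sval t a <= sval t b.
Proof. case: t => t /= ht h; exact: (implyP (forallP (forallP ht a) b) h). Qed.

Lemma R1 m k (t : Dmap m k.+1) (j : 'I_k.+2) : (forall a, sval t a != j) ->
  exists t' : Dmap m k, t = dcomp (df k j) t'.
Proof.
move=> hj.
have hr a : unbump j (sval t a) < k.+1.
  have := hj a; have := ltn_ord (sval t a); have := ltn_ord j.
  move=> h1 h2 /eqP h3. have h4 : nat_of_ord (sval t a) <> nat_of_ord j by move=> e; apply: h3; apply: val_inj.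
  rewrite /unbump; lia.
have mo : monob [ffun a => (inord (unbump j (sval t a)) : 'I_k.+1)].
  apply/forallP=> a; apply/forallP=> b; apply/implyP=> h.
  rewrite !ffunE /= !inordK //. have := dmono t h. rewrite /unbump; lia.
exists (exist (@monob m k) _ mo).
apply: dmap_eq => a; apply: val_inj; rewrite /dcomp /= !ffunE /= inordK // inordK //.
have := hj a; have := ltn_ord (sval t a); have := ltn_ord j.
move=> h1 h2 /eqP h3. have h4 : nat_of_ord (sval t a) <> nat_of_ord j by move=> e; apply: h3; apply: val_inj.
rewrite /bump /unbump; lia.
Qed.

Lemma R2 m n (t : Dmap m n) (j : 'I_m.+1) : dsurj t ->
  exists d : Dmap n m, dcomp t d = did n /\ sval d (sval t j) = j.
Proof.
move=> hs.
pose dl (b : 'I_n.+1) : 'I_m.+1 := if b == sval t j then j else odflt j [pick a | sval t a == b].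
have hdl b : sval t (dl b) = b.
  rewrite /dl; case: eqP => [-> //|_]. case: pickP => [a /eqP //|h].
  case: (hs b) => a ha; have := h a; by rewrite ha eqxx.
have mo : monob [ffun b => dl b].
  apply/forallP=> a; apply/forallP=> b; apply/implyP=> h; rewrite !ffunE.
  case: (leqP (dl a) (dl b)) => // hlt.
  have := dmono t (ltnW hlt); rewrite !hdl => h2.
  have eab : a = b by apply: val_inj; apply/eqP; rewrite eqn_leq h h2.
  by move: hlt; rewrite eab ltnn.
exists (exist (@monob n m) _ mo); split.
  apply: dmap_eq => b; rewrite /dcomp /did /= !ffunE; exact: hdl.
by rewrite /= ffunE /dl eqxx.
Qed.

Lemma R3 n (t : Dmap n n) : dsurj t -> t = did n.
Proof.
move=> hs.
have [g hg] : exists g : 'I_n.+1 -> 'I_n.+1, forall b, sval t (g b) = b.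
  exists (fun b => odflt b [pick a | sval t a == b]) => b.
  case: pickP => [a /eqP //|h]. case: (hs b) => a ha; have := h a; by rewrite ha eqxx.
have ginj : injective g by move=> x y e; rewrite -(hg x) -(hg y) e.
have [g' g1 g2] := inj_card_bij ginj (leqnn _).
have tinj : injective (sval t).
  have tg x : sval t x = g' x by rewrite -{1}(g2 x) hg.
  move=> x y e. by rewrite -(g2 x) -(g2 y) -!tg e.
have strict (a b : 'I_n.+1) : a < b -> sval t a < sval t b.
  move=> h; rewrite ltn_neqAle dmono ?(ltnW h) // andbT.
  apply/eqP=> e; have := tinj _ _ (val_inj e) => eab; by move: h; rewrite eab ltnn.
have ge : forall k (a : 'I_n.+1), nat_of_ord a = k -> k <= sval t a.
  elim=> [//|k IH] a ha.
  have hk : k < n.+1 by have := ltn_ord a; lia.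
  have := IH (Ordinal hk) erefl; have := strict (Ordinal hk) a; rewrite /= ha ltnSn => h1 h2.
  have := h1 is_true_true; lia.
have eqv : forall k (b : 'I_n.+1), nat_of_ord b = k -> sval t b = b.
  elim/ltn_ind => k IH b hb. case: (hs b) => a ha.
  have hab : a <= b by rewrite -[X in _ <= nat_of_ord X]ha; exact: ge.
  case: (ltnP a b) => h.
    have hak : nat_of_ord a < k by rewrite -hb.
    have := IH a hak a erefl. by rewrite ha => e; move: h; rewrite -e ltnn.
  have eab : a = b by apply: val_inj; apply/eqP; rewrite eqn_leq hab h.
  by rewrite -{1}eab ha.
apply: dmap_eq => b; rewrite /did /= ffunE; exact: eqv.
Qed.


Set Implicit Arguments. Unset Strict Implicit. Unset Printing Implicit Defensive.
Import GRing.Theory.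

Unset Implicit Arguments.
Record sgrp := SGrp {
  gob : nat -> zmodType;
  gact : forall m n, Dmap m n -> gob n -> gob m;
  gact_sub : forall m n f (x y : gob n), gact m n f (x - y)%R = (gact m n f x - gact m n f y)%R;
  gact_id : forall n x, gact n n (did n) x = x;
  gact_comp : forall l m n (g : Dmap m n) (f : Dmap l m) x,
      gact l n (dcomp g f) x = gact l m f (gact m n g x) }.
Set Implicit Arguments.
Arguments gact s {m n}.

Definition dd (G : sgrp) k i : gob G k.+1 -> gob G k := gact G (df k i).
Definition ss (G : sgrp) k r : gob G k -> gob G k.+1 := gact G (sd k r).

Arguments dd {G} k i.
Arguments ss {G} k r.

Definition closedP (G : sgrp) (P : forall n, gob G n -> Prop) :=
  (forall n, P n 0%R) /\ (forall n x y, P n x -> P n y -> P n (x - y)%R) /\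
  (forall m n (f : Dmap m n) x, P n x -> P m (gact G f x)).

Definition contrP (G : sgrp) (P : forall n, gob G n -> Prop) :=
  (forall x : gob G 0, P 0 x -> exists y, P 1 y /\ dd 0 0 y = 0%R /\ dd 0 1 y = x) /\
  (forall k (x : gob G k.+1), P _ x -> (forall i, i <= k.+1 -> dd k i x = 0%R) ->
    exists y, P _ y /\ (forall i, i <= k.+1 -> dd k.+1 i y = 0%R) /\ dd k.+1 k.+2 y = x).

Section Gen.
Variable G : sgrp.

Lemma gact0 m n (f : Dmap m n) : gact G f 0%R = 0%R.
Proof. by have := gact_sub G _ _ f 0%R 0%R; rewrite !subrr. Qed.
Lemma gactN m n (f : Dmap m n) x : gact G f (- x)%R = (- gact G f x)%R.
Proof. by rewrite -[(- x)%R]sub0r gact_sub gact0 sub0r. Qed.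
Lemma gactD m n (f : Dmap m n) x y : gact G f (x + y)%R = (gact G f x + gact G f y)%R.
Proof. have -> : (x + y = x - (- y))%R by rewrite opprK. by rewrite gact_sub gactN opprK. Qed.

Lemma ddB k i (x y : gob G k.+1) : dd k i (x - y)%R = (dd k i x - dd k i y)%R.
Proof. exact: gact_sub. Qed.
Lemma ddD k i (x y : gob G k.+1) : dd k i (x + y)%R = (dd k i x + dd k i y)%R.
Proof. exact: gactD. Qed.
Lemma dd0 k i : dd (G:=G) k i 0%R = 0%R.
Proof. exact: gact0. Qed.
Lemma ssB k i (x y : gob G k) : ss k i (x - y)%R = (ss k i x - ss k i y)%R.
Proof. exact: gact_sub. Qed.
Lemma ss0 k i : ss (G:=G) k i 0%R = 0%R.
Proof. exact: gact0. Qed.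

Lemma ddd k i j (w : gob G k.+2) : i < j -> j <= k.+2 ->
  dd k i (dd k.+1 j w) = dd k j.-1 (dd k.+1 i w).
Proof. move=> h1 h2; rewrite /dd -!gact_comp I1 //. Qed.

Lemma dss k r (x : gob G k) : r <= k -> dd k r (ss k r x) = x.
Proof. by move=> h; rewrite /dd /ss -gact_comp I2 // gact_id. Qed.

Lemma dsS k i r (x : gob G k.+1) : i < r -> r <= k.+1 ->
  dd k.+1 i (ss k.+1 r x) = ss k r.-1 (dd k i x).
Proof. move=> h1 h2; rewrite /dd /ss -!gact_comp I3 //. Qed.

Unset Implicit Arguments.
Variable P : forall n, gob G n -> Prop.
Set Implicit Arguments.
Hypothesis hP : closedP P.

Lemma P0 n : P n 0%R. Proof. by case: hP. Qed.
Lemma PB n x y : P n x -> P n y -> P n (x - y)%R. Proof. case: hP => _ [h _]; exact: h. Qed.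
Lemma PA m n (f : Dmap m n) x : P n x -> P m (gact G f x). Proof. case: hP => _ [_ h]; exact: h. Qed.
Lemma PN n x : P n x -> P n (- x)%R. Proof. by move=> h; rewrite -sub0r; apply: PB => //; apply: P0. Qed.
Lemma PD n x y : P n x -> P n y -> P n (x + y)%R.
Proof. move=> h1 h2; rewrite -[y]opprK; apply: PB => //; exact: PN. Qed.

Lemma horn0 (z : gob G 0) : P 0 z -> exists w, P 1 w /\ dd 0 0 w = z.
Proof. move=> h; exists (ss 0 0 z); split; [exact: PA | exact: dss]. Qed.

Lemma hornS k (z : nat -> gob G k.+1) : (forall i, i <= k.+1 -> P _ (z i)) ->
  (forall i j, i < j -> j <= k.+1 -> dd k i (z j) = dd k j.-1 (z i)) ->
  exists w, P _ w /\ forall i, i <= k.+1 -> dd k.+1 i w = z i.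
Proof.
move=> hz hc.
suff: forall r, r <= k.+1 -> exists w, P _ w /\ forall i, i <= r -> dd k.+1 i w = z i.
  by move/(_ k.+1 (leqnn _)).
elim=> [_|r IH hr].
  exists (ss k.+1 0 (z 0)); split; first by apply: PA; apply: hz.
  by move=> i; rewrite leqn0 => /eqP ->; rewrite dss.
have [w [Pw hw]] := IH (ltnW hr).
exists (w - ss k.+1 r.+1 (dd k.+1 r.+1 w - z r.+1))%R; split.
  apply: PB => //; apply: PA; apply: PB; [exact: PA | exact: hz].
move=> i hi; rewrite ddB.
case: (ltnP i r.+1) => hir.
  have hr2 : r.+1 <= k.+2 by apply: leqW. have hir2 : i <= r by []. rewrite dsS // ddB ddd // (hw i) // (hc i r.+1) //=.
  by rewrite subrr ss0 subr0.
have -> : i = r.+1 by apply/eqP; rewrite eqn_leq hi hir.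
by rewrite dss // opprB addrC subrK.
Qed.

Hypothesis hC : contrP P.

Lemma sphere1 (z0 z1 : gob G 0) : P 0 z0 -> P 0 z1 ->
  exists w, P 1 w /\ dd 0 0 w = z0 /\ dd 0 1 w = z1.
Proof.
move=> h0 h1; have [w [Pw hw]] := horn0 h0.
have [y [Py [y0 y1]]] := hC.1 (z1 - dd 0 1 w)%R (PB h1 (PA _ Pw)).
exists (w + y)%R; split; first exact: PD.
by rewrite !ddD hw y0 y1 addr0 addrC subrK.
Qed.

Lemma sphereS k (z : nat -> gob G k.+1) : (forall i, i <= k.+2 -> P _ (z i)) ->
  (forall i j, i < j -> j <= k.+2 -> dd k i (z j) = dd k j.-1 (z i)) ->
  exists w, P _ w /\ forall i, i <= k.+2 -> dd k.+1 i w = z i.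
Proof.
move=> hz hc.
have [w [Pw hw]] := hornS (fun i h => hz i (leqW h)) (fun i j h1 h2 => hc i j h1 (leqW h2)).
have Pu : P _ (z k.+2 - dd k.+1 k.+2 w)%R by apply: PB (hz _ (leqnn _)) (PA _ Pw).
have hf : forall i, i <= k.+1 -> dd k i (z k.+2 - dd k.+1 k.+2 w)%R = 0%R.
  move=> i hi; rewrite ddB hc // ddd // hw //= subrr //.
have [y [Py [y0 y1]]] := hC.2 k _ Pu hf.
exists (w + y)%R; split; first exact: PD.
move=> i hi; rewrite ddD.
case: (ltnP i k.+2) => h.
  by rewrite hw // y0 // addr0.
have -> : i = k.+2 by apply/eqP; rewrite eqn_leq hi h.
by rewrite y1 addrC subrK.
Qed.

Definition compat k : (nat -> gob G k) -> Prop :=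
  match k with 0 => fun _ => True
  | k'.+1 => fun z => forall i j, i < j -> j <= k'.+2 -> dd k' i (z j) = dd k' j.-1 (z i) end.

Lemma sphere k (z : nat -> gob G k) : (forall i, i <= k.+1 -> P _ (z i)) -> compat z ->
  exists w, P _ w /\ forall i, i <= k.+1 -> dd k i w = z i.
Proof.
case: k z => [|k] z hz hc.
  have [w [Pw [w0 w1]]] := sphere1 (hz 0 erefl) (hz 1 erefl).
  by exists w; split => // i; rewrite leq_eqVlt ltnS leqn0 => /orP [] /eqP ->.
exact: sphereS.
Qed.

End Gen.


Set Implicit Arguments. Unset Strict Implicit. Unset Printing Implicit Defensive.
Import GRing.Theory.

Section Map.
Unset Implicit Arguments.
Variables G H : sgrp.
Variable p : forall n, gob G n -> gob H n.
Hypothesis hpB : forall n x y, p n (x - y)%R = (p n x - p n y)%R.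
Hypothesis hpN : forall m n (f : Dmap m n) x, p m (gact G f x) = gact H f (p n x).
Variable PG : forall n, gob G n -> Prop.
Variable QH : forall n, gob H n -> Prop.
Set Implicit Arguments.
Hypothesis hPG : closedP PG.
Hypothesis hmap : forall n x, PG n x -> QH n (p n x).
Hypothesis hsurj : forall n y, QH n y -> exists x, PG n x /\ p n x = y.

Definition NP n x := PG n x /\ p n x = 0%R.

Lemma p0 n : p n 0%R = 0%R.
Proof. by have := hpB n 0%R 0%R; rewrite !subrr. Qed.
Lemma pN n x : p n (- x)%R = (- p n x)%R.
Proof. by rewrite -[(- x)%R]sub0r hpB p0 sub0r. Qed.
Lemma pD n x y : p n (x + y)%R = (p n x + p n y)%R.
Proof. have -> : (x + y = x - (- y))%R by rewrite opprK. by rewrite hpB pN opprK. Qed.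
Lemma pdd k i x : p k (dd k i x) = dd k i (p k.+1 x).
Proof. exact: hpN. Qed.

Lemma closedN : closedP NP.
Proof.
split; first by move=> n; split; [exact: P0 | exact: p0].
split.
  move=> n x y [h1 h2] [h3 h4]; split; [exact: PB | by rewrite hpB h2 h4 subrr].
move=> m n f x [h1 h2]; split; [exact: PA | by rewrite hpN h2 gact0].
Qed.

Lemma nlift k (z : gob H k.+1) : QH _ z -> (forall i, i <= k -> dd k i z = 0%R) ->
  exists z', PG _ z' /\ p _ z' = z /\ forall i, i <= k -> dd k i z' = 0%R.
Proof.
move=> hz hf; have [z0 [Pz0 ez0]] := hsurj hz.
case: k z hz hf z0 Pz0 ez0 => [|k] z hz hf z0 Pz0 ez0.
  have Nu : NP (dd 0 0 z0) by split; [exact: PA | rewrite pdd ez0 hf].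
  have [h [[Ph ph] hh]] := horn0 closedN Nu.
  exists (z0 - h)%R; split; first exact: PB.
  split; first by rewrite hpB ez0 ph subr0.
  by move=> i; rewrite leqn0 => /eqP ->; rewrite ddB hh subrr.
have Nu : forall i, i <= k.+1 -> NP (dd k.+1 i z0).
  by move=> i hi; split; [exact: PA | rewrite pdd ez0 hf].
have hc : forall i j, i < j -> j <= k.+1 -> dd k i (dd k.+1 j z0) = dd k j.-1 (dd k.+1 i z0).
  by move=> i j h1 h2; rewrite ddd //; apply: leqW.
have [h [[Ph ph] hh]] := hornS closedN Nu hc.
exists (z0 - h)%R; split; first exact: PB.
split; first by rewrite hpB ez0 ph subr0.
by move=> i hi; rewrite ddB hh // subrr.
Qed.

Lemma KER : contrP PG -> contrP QH -> contrP NP.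
Proof.
move=> CG CH; split.
  move=> x [Px px].
  have [y [Py [y0 y1]]] := CG.1 x Px.
  have hf : forall i, i <= 1 -> dd 0 i (p 1 y) = 0%R.
    move=> i; rewrite leq_eqVlt ltnS leqn0 => /orP [] /eqP ->.
      by rewrite -pdd y1.
    by rewrite -pdd y0 p0.
  have [z [Qz [zf zl]]] := CH.2 0 _ (hmap Py) hf.
  have [z' [Pz' [pz' zf']]] := nlift Qz zf.
  exists (y - dd 1 2 z')%R; split.
    split; first by apply: PB => //; exact: PA.
    by rewrite hpB pdd pz' zl subrr.
  split.
    by rewrite ddB y0 ddd // zf' // dd0 subrr.
  by rewrite ddB y1 ddd //= zf' // dd0 subr0.
move=> k x [Px px] hx.
have [y [Py [yf yl]]] := CG.2 k x Px hx.
have hf : forall i, i <= k.+2 -> dd k.+1 i (p _ y) = 0%R.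
  move=> i hi; rewrite -pdd; case: (ltnP i k.+2) => h.
    by rewrite yf // p0.
  have -> : i = k.+2 by apply/eqP; rewrite eqn_leq hi h.
  by rewrite yl.
have [z [Qz [zf zl]]] := CH.2 k.+1 _ (hmap Py) hf.
have [z' [Pz' [pz' zf']]] := nlift Qz zf.
exists (y - dd k.+2 k.+3 z')%R; split.
  split; first by apply: PB => //; exact: PA.
  by rewrite hpB pdd pz' zl subrr.
split.
  move=> i hi; have h1 : i < k.+3 by lia. rewrite ddB yf // ddd //= zf' // dd0 subrr //.
by rewrite ddB yl ddd //= zf' // dd0 subr0.
Qed.

Lemma QUOT : contrP PG -> contrP NP -> contrP QH.
Proof.
move=> CG CN; split.
  move=> x Qx; have [u [Pu pu]] := hsurj Qx.
  have [y [Py [y0 y1]]] := CG.1 u Pu.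
  exists (p _ y); split; first exact: hmap.
  by rewrite -!pdd y0 y1 p0.
move=> k x Qx hx.
have [u1 [Pu1 [pu1 fu1]]] := nlift Qx (fun i h => hx i (leqW h)).
have Nv0 : NP (dd k k.+1 u1) by split; [exact: PA | rewrite pdd pu1 hx].
have [v [[Pv pv] [vf vl]]] : exists v, NP v /\ (forall i, i <= k -> dd k i v = 0%R) /\ dd k k.+1 v = dd k k.+1 u1.
  case: k x Qx hx u1 Pu1 pu1 fu1 Nv0 => [|k] x Qx hx u1 Pu1 pu1 fu1 Nv0.
    have [v [Nv [v0 v1]]] := CN.1 _ Nv0.
    by exists v; split => //; split => // i; rewrite leqn0 => /eqP ->.
  have hf : forall i, i <= k.+1 -> dd k i (dd k.+1 k.+2 u1) = 0%R.
    by move=> i hi; rewrite ddd //= fu1 // dd0.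
  have [v [Nv [vf vl]]] := CN.2 k _ Nv0 hf.
  by exists v.
have hf : forall i, i <= k.+1 -> dd k i (u1 - v)%R = 0%R.
  move=> i hi; rewrite ddB; case: (ltnP i k.+1) => h.
    by rewrite fu1 // vf // subrr.
  have -> : i = k.+1 by apply/eqP; rewrite eqn_leq hi h.
  by rewrite vl subrr.
have [y [Py [yf yl]]] := CG.2 k _ (PB hPG Pu1 Pv) hf.
exists (p _ y); split; first exact: hmap.
split; first by move=> i hi; rewrite -pdd yf // p0.
by rewrite -pdd yl hpB pu1 pv subr0.
Qed.

End Map.


Unset Implicit Arguments. Unset Strict Implicit. Unset Printing Implicit Defensive.
Import GRing.Theory.

Lemma sface (T : sset) k i j (x : T k.+2) : i < j -> j <= k.+2 ->
  sact T k k.+1 (df k i) (sact T k.+1 k.+2 (df k.+1 j) x) =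
  sact T k k.+1 (df k j.-1) (sact T k.+1 k.+2 (df k.+1 i) x).
Proof. by move=> h1 h2; rewrite -!sact_comp I1. Qed.

Section RL.
Unset Implicit Arguments.
Variables G H : sgrp.
Variable p : forall n, gob G n -> gob H n.
Hypothesis hpB : forall n x y, p n (x - y)%R = (p n x - p n y)%R.
Hypothesis hpN : forall m n (f : Dmap m n) x, p m (gact G f x) = gact H f (p n x).
Variable PG : forall n, gob G n -> Prop.
Variable QH : forall n, gob H n -> Prop.
Hypothesis hPG : closedP PG.
Hypothesis hsurj : forall n y, QH n y -> exists x, PG n x /\ p n x = y.
Hypothesis CN : contrP (NP p PG).

Variables S T : sset.
Variable alpha : smap S T.
Hypothesis ainj : sinjective S T alpha.
Variable a : forall n, S n -> gob G n.
Hypothesis a_nat : forall m n (f : Dmap m n) x, a m (sact S m n f x) = gact G f (a n x).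
Hypothesis a_P : forall n x, PG n (a n x).
Variable b : forall n, T n -> gob H n.
Hypothesis b_nat : forall m n (f : Dmap m n) x, b m (sact T m n f x) = gact H f (b n x).
Hypothesis b_Q : forall n x, QH n (b n x).
Hypothesis ab : forall n x, p n (a n x) = b n (alpha n x).
Set Implicit Arguments.

Definition U n m (y : T m) : Prop := (exists s, alpha m s = y) \/
  exists k, k < n /\ exists (x : T k) (t : Dmap m k), y = sact T m k t x.

Arguments U n m y : clear implicits.

Lemma Ucl n l m (g : Dmap l m) y : U n m y -> U n l (sact T l m g y).
Proof.
case=> [[s <-]|[k [hk [x [t ->]]]]].
  by left; exists (sact S l m g s); rewrite smf_nat.
by right; exists k; split => //; exists x, (dcomp t g); rewrite sact_comp.
Qed.

Lemma Umono n n' m y : n <= n' -> U n m y -> U n' m y.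
Proof.
move=> h [h1|[k [hk h2]]]; [by left | right; exists k; split => //].
exact: leq_trans hk h.
Qed.

Lemma Udim m y : U m.+1 m y.
Proof. by right; exists m; split => //; exists y, (did m); rewrite sact_id. Qed.

Definition Inv n (c : forall m, T m -> gob G m) :=
  (forall m y, U n m y -> PG m (c m y)) /\ (forall m s, c m (alpha m s) = a m s) /\
  (forall m y, U n m y -> p m (c m y) = b m y) /\
  (forall l m (g : Dmap l m) y, U n m y -> c l (sact T l m g y) = gact G g (c m y)).

Definition c0 m (y : T m) : gob G m :=
  match excluded_middle_informative (exists s, alpha m s = y) with
  | left h => a m (proj1_sig (constructive_indefinite_description _ h))
  | right _ => 0%R end.

Arguments c0 m y : clear implicits.

Lemma c0a m s : c0 m (alpha m s) = a m s.
Proof.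
rewrite /c0; case: excluded_middle_informative => [h|h]; last by case: h; exists s.
case: constructive_indefinite_description => s' /= hs; by rewrite (ainj m _ _ hs).
Qed.

Lemma Inv0 : Inv 0 c0.
Proof.
split; first by move=> m y [[s <-]|[k [//]]]; rewrite c0a.
split; first exact: c0a.
split; first by move=> m y [[s <-]|[k [//]]]; rewrite c0a.
move=> l m g y [[s <-]|[k [//]]].
by rewrite -smf_nat !c0a a_nat.
Qed.

Lemma NS n l (t : Dmap l n) (x : T n) : ~ U n l (sact T l n t x) -> dsurj t.
Proof.
move=> hU; apply: NNPP => hns.
have [j hj] : exists j, forall a, sval t a <> j.
  apply: NNPP => h; apply: hns => j; apply: NNPP => h2; apply: h; exists j => a0 e.
  by apply: h2; exists a0.
clear hns; case: n t x hU j hj => [|k] t x hU j hj.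
  by apply: (hj ord0); rewrite (ord1 j) (ord1 (sval t ord0)).
have [t' et] := R1 (t := t) (j := j) (fun a0 => introN eqP (hj a0)).
apply: hU; rewrite et sact_comp; apply: Ucl; right; exists k; split => //.
by exists (sact T k k.+1 (df k j) x), (did k); rewrite sact_id.
Qed.

Definition FS n (c : forall m, T m -> gob G m) (x : T n) w :=
  PG n w /\ p n w = b n x /\
  forall l (t : Dmap l n), U n l (sact T l n t x) -> c l (sact T l n t x) = gact G t w.

Arguments FS n c x w : clear implicits.

Lemma new_contra n l (t : Dmap l n) (x : T n) : ~ U n n x -> dsurj t -> ~ U n l (sact T l n t x).
Proof.
move=> hx hs hU; have [d [hd _]] := R2 ord0 hs; apply: hx.
by rewrite -[x](sact_id T n) -hd sact_comp; apply: Ucl.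
Qed.

Lemma EX n c (x : T n) : Inv n c -> ~ U n n x -> exists w, FS n c x w.
Proof.
move=> [IP [Ia [Ip In]]] hx.
have [w1 [Pw1 pw1]] := hsurj _ _ (b_Q _ x).
case: n c x IP Ia Ip In hx w1 Pw1 pw1 => [|k] c x IP Ia Ip In hx w1 Pw1 pw1.
  exists w1; split => //; split => // l t hU; exfalso.
  apply: (new_contra hx _ hU) => j; exists ord0; 
  by rewrite (ord1 j) (ord1 (sval t ord0)).
pose f i := c k (sact T k k.+1 (df k i) x).
have Uf i : U k.+1 k (sact T k k.+1 (df k i) x).
  by right; exists k; split => //; exists (sact T k k.+1 (df k i) x), (did k); rewrite sact_id.
pose e i := (f i - dd k i w1)%R.
have Ne i : NP p PG (e i).
  split; first by apply: PB => //; [exact: IP | exact: PA].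
  by rewrite hpB Ip // pdd // pw1 /dd b_nat subrr.
have hcomp : compat e.
  move: (k) x hx w1 Pw1 pw1 IP Ia Ip In @f Uf @e Ne => [|k'] x' hx' w1' Pw1' pw1' IP' Ia' Ip' In' f' Uf' e' Ne' //=.
  move=> i j h1 h2; rewrite /e' !ddB ddd // /f' /dd -!In' // -/(dd _ _ _) sface //.
have [w2 [[Pw2 pw2] hw2]] := sphere (closedN hpB hpN hPG) CN (fun i _ => Ne i) hcomp.
exists (w1 + w2)%R; split; first exact: PD.
split; first by rewrite (pD hpB) pw1 pw2 addr0.
have faces i : i <= k.+1 -> dd k i (w1 + w2)%R = f i.
  by move=> hi; rewrite ddD hw2 // /e addrC subrK.
move=> l t hU.
have hns : ~ dsurj t by move=> hs; exact: (new_contra hx hs hU).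
have [j hj] : exists j, forall a, sval t a <> j.
  apply: NNPP => h; apply: hns => j; apply: NNPP => h2; apply: h; exists j => a0 e0.
  by apply: h2; exists a0.
have [t' et] := R1 (t := t) (j := j) (fun a0 => introN eqP (hj a0)).
rewrite et sact_comp In // gact_comp -/(dd _ _ _) faces //.
by rewrite -ltnS.
Qed.

Lemma WD n (x x' : T n) m (t t' : Dmap m n) : ~ U n n x -> ~ U n n x' ->
  sact T m n t x = sact T m n t' x' -> ~ U n m (sact T m n t x) -> x = x' /\ t = t'.
Proof.
move=> hx hx' e hU.
have hs := NS hU.
have key : forall d : Dmap n m, dcomp t d = did n -> dcomp t' d = did n /\ x = x'.
  move=> d hd.
  have ex : x = sact T n n (dcomp t' d) x' by rewrite sact_comp -e -sact_comp hd sact_id.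
  have hr : dcomp t' d = did n.
    apply: R3; apply: (NS (t := dcomp t' d) (x := x')); by rewrite -ex.
  by split => //; rewrite ex hr sact_id.
have [d0 [hd0 _]] := R2 ord0 hs.
have [_ exx] := key d0 hd0.
split => //.
apply: dmap_eq => j.
have [d [hd hdj]] := R2 j hs.
have [hr _] := key d hd.
have := f_equal (fun r : Dmap n n => sval r (sval t j)) hr.
by rewrite /dcomp /did /= !ffunE hdj => ->.
Qed.

Definition cnext n (c : forall m, T m -> gob G m) (W : T n -> gob G n) m (y : T m) : gob G m :=
 match excluded_middle_informative (U n m y) with
 | left _ => c m y
 | right _ =>
   match excluded_middle_informative
     (exists xt : T n * Dmap m n, ~ U n n xt.1 /\ y = sact T m n xt.2 xt.1) with
   | left h => let xt := proj1_sig (constructive_indefinite_description _ h) in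
               gact G xt.2 (W xt.1)
   | right _ => 0%R end end.

Arguments cnext n c W m y : clear implicits.

Lemma VAL n c W m (y : T m) (x : T n) t : ~ U n m y -> ~ U n n x -> y = sact T m n t x ->
  cnext n c W m y = gact G t (W x).
Proof.
move=> hy hx ey; rewrite /cnext.
case: excluded_middle_informative => [//|_].
case: excluded_middle_informative => [h|h]; last by case: h; exists (x, t).
case: constructive_indefinite_description => [[x' t']] /= [hx' ey'].
have e2 : sact T m n t' x' = sact T m n t x by rewrite -ey' -ey.
have hU2 : ~ U n m (sact T m n t' x') by rewrite -ey'.
by have [-> ->] := WD hx' hx e2 hU2.
Qed.

Lemma DEC n m (y : T m) : U n.+1 m y -> ~ U n m y ->
  exists x t, ~ U n n x /\ y = sact T m n t x.
Proof.
move=> [h|[k [hk [x [t ey]]]]] hn; first by case: hn; left.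
case: (ltnP k n) => hkn.
  by case: hn; right; exists k; split => //; exists x, t.
have ekn : k = n by apply/eqP; rewrite eqn_leq hkn andbT -ltnS.
subst k; exists x, t; split => // hx; apply: hn; rewrite ey; exact: Ucl.
Qed.

Lemma STEP n c : Inv n c -> exists c', Inv n.+1 c' /\ forall m y, U n m y -> c' m y = c m y.
Proof.
move=> hI.
have hW : forall x : T n, exists w, ~ U n n x -> FS n c x w.
  move=> x; case: (classic (U n n x)) => h; first by exists 0%R.
  have [w hw] := EX hI h; by exists w.
pose W x := proj1_sig (constructive_indefinite_description _ (hW x)).
have HW x : ~ U n n x -> FS n c x (W x).
  by rewrite /W; case: constructive_indefinite_description.
have agree m y : U n m y -> cnext n c W m y = c m y.
  by move=> h; rewrite /cnext; case: excluded_middle_informative.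
case: hI => [IP [Ia [Ip In]]].
exists (cnext n c W); split => //.
split.
  move=> m y hU; case: (classic (U n m y)) => h; first by rewrite agree //; exact: IP.
  have [x [t [hx ey]]] := DEC hU h.
  rewrite (VAL c W h hx ey); apply: PA => //; exact: (HW x hx).1.
split.
  by move=> m s; rewrite agree ?Ia //; left; exists s.
split.
  move=> m y hU; case: (classic (U n m y)) => h; first by rewrite agree // Ip.
  have [x [t [hx ey]]] := DEC hU h.
  by rewrite (VAL c W h hx ey) hpN (HW x hx).2.1 ey b_nat.
move=> l m g y hU; case: (classic (U n m y)) => h.
  by rewrite !agree ?In //; exact: Ucl.
have [x [t [hx ey]]] := DEC hU h.
rewrite (VAL c W h hx ey) -gact_comp.
have ey2 : sact T l m g y = sact T l n (dcomp t g) x by rewrite ey sact_comp.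
case: (classic (U n l (sact T l m g y))) => h2.
  rewrite agree // ey2 (HW x hx).2.2 //; by rewrite -ey2.
exact: (VAL c W h2 hx ey2).
Qed.

Fixpoint cs n : {c | Inv n c} :=
  match n with
  | 0 => exist _ c0 Inv0
  | n'.+1 => let h := constructive_indefinite_description _ (STEP (proj2_sig (cs n'))) in
             exist _ (proj1_sig h) (proj1 (proj2_sig h))
  end.

Lemma cs_agree n m y : U n m y -> sval (cs n.+1) m y = sval (cs n) m y.
Proof. by move=> h /=; case: constructive_indefinite_description => c' [_ hc] /=; apply: hc. Qed.

Lemma cs_stable n n' m y : n <= n' -> U n m y -> sval (cs n') m y = sval (cs n) m y.
Proof.
elim: n' => [|n' IH] hn hU; first by move: hn; rewrite leqn0 => /eqP ->.
case: (ltnP n n'.+1) => h.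
  by rewrite cs_agree ?IH //; apply: Umono hU; rewrite -ltnS.
have -> : n = n'.+1 by apply/eqP; rewrite eqn_leq hn h.
done.
Qed.

Theorem RLthm : exists c : forall n, T n -> gob G n,
  (forall l m (g : Dmap l m) y, c l (sact T l m g y) = gact G g (c m y)) /\
  (forall m y, PG m (c m y)) /\ (forall m s, c m (alpha m s) = a m s) /\
  (forall m y, p m (c m y) = b m y).
Proof.
exists (fun m y => sval (cs m.+1) m y).
split.
  move=> l m g y.
  have h1 : l.+1 <= l.+1 + m.+1 by apply: leq_addr.
  have h2 : m.+1 <= l.+1 + m.+1 by apply: leq_addl.
  rewrite -(cs_stable h1 (Udim _)) -(cs_stable h2 (Udim _)).
  case: (cs (l.+1 + m.+1)) => c [_ [_ [_ In]]] /=.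
  apply: In; apply: Umono h2 (Udim _).
split.
  by move=> m y; case: (cs m.+1) => c [IP _] /=; apply: IP; apply: Udim.
split.
  by move=> m s; case: (cs m.+1) => c [_ [Ia _]] /=.
by move=> m y; case: (cs m.+1) => c [_ [_ [Ip _]]] /=; apply: Ip; apply: Udim.
Qed.

End RL.


Set Implicit Arguments. Unset Strict Implicit. Unset Printing Implicit Defensive.
Import GRing.Theory.

Definition sgA (A : scx) d : sgrp :=
  SGrp (cob A d) (cact A d) (cact_sub A d) (cact_id A d) (cact_comp A d).

Definition PT (G : sgrp) n (x : gob G n) := True.

Lemma PT_closed G : closedP (@PT G).
Proof. by split => //; split. Qed.

Lemma contr_conv (A : scx) d : scx_level_contractible A d -> contrP (@PT (sgA A d)).
Proof.
move=> [h1 h2]; split.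
  move=> x _; have [y [hy1 hy2]] := h1 x.
  exists y; split => //; split.
    by apply: (hy1 (inord 0)); rewrite inordK.
  rewrite -hy2 /dd /df /=; congr (cact _ _ _ _ (face _) _); apply: val_inj; by rewrite /= inordK.
move=> k x _ hx.
have hx' : forall i : 'I_k.+2, cact A d k k.+1 (face i) x = 0%R.
  by move=> i; have := hx i (ltn_ord i); rewrite /dd /df /= inord_val.
have [y [hy1 hy2]] := h2 k x hx'.
exists y; split => //; split.
  move=> i hi; have hi3 : i < k.+3 by lia. have := hy1 (inord i); rewrite inordK // => h; exact: (h hi).
rewrite -hy2 /dd /df /=; congr (cact _ _ _ _ (face _) _); apply: val_inj; by rewrite /= inordK.
Qed.

Definition Delta (n : nat) : sset.
refine (@SSet (fun m => Dmap m n) (fun l m g t => dcomp t g) _ _).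
- by move=> m t; apply: dmap_eq => i; rewrite /dcomp /did /= !ffunE.
- by move=> l m k g f t; apply: dmap_eq => i; rewrite /dcomp /= !ffunE.
Defined.

Section Main.
Unset Implicit Arguments.
Variables (A B : scx) (f : scmap A B).
Hypothesis ha : forall n, quasi_iso (@levelmap A B f n).
Hypothesis hb : forall S : sset, psurj (@ofSmap A B f S).
Hypothesis hc : forall d, scx_level_contractible A d /\ scx_level_contractible B d.

Lemma cact0 (C : scx) d m n (g : Dmap m n) : cact C d m n g 0%R = 0%R.
Proof. exact: (@gact0 (sgA C d) m n g). Qed.
Lemma cactB (C : scx) d m n (g : Dmap m n) x y : cact C d m n g (x - y)%R = (cact C d m n g x - cact C d m n g y)%R.
Proof. exact: cact_sub. Qed.
Lemma cactD (C : scx) d m n (g : Dmap m n) x y : cact C d m n g (x + y)%R = (cact C d m n g x + cact C d m n g y)%R.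
Proof. exact: (@gactD (sgA C d) m n g x y). Qed.
Lemma cdif0 (C : scx) d n : cdif C d n 0%R = 0%R.
Proof. by have := cdif_sub C d n 0%R 0%R; rewrite !subrr. Qed.
Lemma cdifN (C : scx) d n x : cdif C d n (- x)%R = (- cdif C d n x)%R.
Proof. by rewrite -[(- x)%R]sub0r cdif_sub cdif0 sub0r. Qed.
Lemma cdifD (C : scx) d n x y : cdif C d n (x + y)%R = (cdif C d n x + cdif C d n y)%R.
Proof. have -> : (x + y = x - (- y))%R by rewrite opprK. by rewrite cdif_sub cdifN opprK. Qed.
Lemma f0 d n : f d n 0%R = 0%R.
Proof. by have := scf_sub _ _ f d n 0%R 0%R; rewrite !subrr. Qed.
Lemma fN d n x : f d n (- x)%R = (- f d n x)%R.
Proof. by rewrite -[(- x)%R]sub0r scf_sub f0 sub0r. Qed.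
Lemma fD d n x y : f d n (x + y)%R = (f d n x + f d n y)%R.
Proof. have -> : (x + y = x - (- y))%R by rewrite opprK. by rewrite scf_sub fN opprK. Qed.

Lemma LS d n (z : cob B d n) : exists x, f d n x = z.
Proof.
have hn : cnatural (fun m (t : Delta n m) => cact B d m n t z).
  by move=> l m g t; rewrite /= cact_comp.
have [x [_ hx]] := hb (Delta n) d (fun m (t : Delta n m) => cact B d m n t z) hn.
by exists (x n (did n)); have := hx n (did n); rewrite /ofSmap /= cact_id.
Qed.

Lemma LA0 n (x : cob A 0 n) : cdif A 0 n x = 0%R -> f 0 n x = 0%R -> x = 0%R.
Proof. move=> h1 h2; exact: ((ha n).1 0 x (conj I h1) h2). Qed.

Lemma LA d n (x : cob A d.+1 n) : cdif A d.+1 n x = 0%R -> f d.+1 n x = 0%R ->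
  exists u, f d n u = 0%R /\ cdif A d n u = x.
Proof.
move=> h1 h2.
have [u' [_ hu']] : exists u', True /\ cdif A d n u' = x.
  apply: ((ha n).1 d.+1 x (conj I h1)).
  by exists 0%R; split => //; rewrite /= /levelmap h2 cdif0.
have cyc : pcycle (C := level B n) (f d n u').
  by split => //; rewrite /= -scf_dif hu' h2.
have [v [[_ hv] hb2]] := (ha n).2 d (f d n u') cyc.
have {}hv : cdif A d n v = 0%R := hv.
move: hb2; rewrite /levelmap.
case: d x h1 h2 u' hu' cyc v hv => [|d] x h1 h2 u' hu' cyc v hv /= hb2.
  exists (u' - v)%R; split; first by rewrite scf_sub -opprB hb2 oppr0.
  by rewrite cdif_sub hu' hv subr0.
case: hb2 => r [_ hr].
have [r' hr'] := LS _ _ r.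
exists (u' - v + cdif A d n r')%R; split.
  by rewrite fD scf_sub scf_dif hr' hr addrC addrA subrK subrr.
by rewrite cdifD cdif_sub hu' hv cdif2 !subr0 addr0.
Qed.

Definition pf d : forall n, gob (sgA A d) n -> gob (sgA B d) n := fun n x => f d n x.
Definition pd d : forall n, gob (sgA A d) n -> gob (sgA A d.+1) n := fun n x => cdif A d n x.
Arguments pf d n x : clear implicits.
Arguments pd d n x : clear implicits.
Definition PGK d := NP (pf d) (@PT (sgA A d)).
Arguments PGK d n x : clear implicits.
Definition Zp d := NP (pd d) (PGK d).
Arguments Zp d n x : clear implicits.

Lemma pfB d : forall n x y, pf d n (x - y)%R = (pf d n x - pf d n y)%R.
Proof. exact: scf_sub. Qed.
Lemma pfN d : forall m n (g : Dmap m n) x, pf d m (gact (sgA A d) g x) = gact (sgA B d) g (pf d n x).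
Proof. exact: scf_nat. Qed.
Lemma pdB d : forall n x y, pd d n (x - y)%R = (pd d n x - pd d n y)%R.
Proof. exact: cdif_sub. Qed.
Lemma pdN d : forall m n (g : Dmap m n) x, pd d m (gact (sgA A d) g x) = gact (sgA A d.+1) g (pd d n x).
Proof. exact: cdif_nat. Qed.

Lemma PGK_closed d : closedP (PGK d).
Proof. exact: (closedN (pfB d) (pfN d) (PT_closed _)). Qed.

Lemma Kcontr d : contrP (PGK d).
Proof.
apply: (KER (pfB d) (pfN d) (PT_closed _) (QH := @PT (sgA B d)) (fun _ _ _ => I)).
- by move=> n y _; have [x hx] := LS _ _ y; exists x.
- exact: contr_conv (hc d).1.
- exact: contr_conv (hc d).2.
Qed.

Lemma Zcontr d : contrP (Zp d).
Proof.
elim: d => [|d IH].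
  have z0 n (x : cob A 0 n) : Zp 0 n x -> x = 0%R.
    by move=> [[_ h1] h2]; apply: LA0.
  have Z0 n : Zp 0 n 0%R by case: (closedN (pdB 0) (pdN 0) (PGK_closed 0)) => h _; exact: h.
  split.
    move=> x hx; exists 0%R; split => //; rewrite /dd !(@gact0 (sgA A 0)) (z0 _ _ hx) //.
  move=> k x hx _; exists 0%R; split => //; split.
    by move=> i _; rewrite /dd (@gact0 (sgA A 0)).
  by rewrite /dd (@gact0 (sgA A 0)) (z0 _ _ hx).
apply: (QUOT (pdB d) (pdN d) (PGK_closed d) (QH := Zp d.+1)).
- move=> n x [_ h1]; split; first split => //.
    by move: h1; rewrite /pf /pd /= scf_dif => ->; rewrite cdif0.
  by rewrite /pd /= cdif2.
- move=> n y [[_ h1] h2]; have [u [hu1 hu2]] := LA _ _ _ h2 h1.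
  by exists u.
- exact: Kcontr.
- exact: IH.
Qed.

Section Fix.
Variables (S T : sset) (alpha : smap S T).
Hypothesis hinj : sinjective S T alpha.

Lemma SUR : psurj (@gapmap A B f S T alpha).
Proof.
move=> d [p1 p2] [n1 [n2 hc']].
have hs : forall n (y : gob (sgA B d) n), PT y -> exists x, PT x /\ pf d n x = y.
  by move=> n y _; have [x hx] := LS _ _ y; exists x.
have [c [cn [_ [ca cp]]]] := RLthm (pfB d) (pfN d) (PT_closed (sgA A d)) hs (Kcontr d) hinj
  (a := p1) n1 (fun _ _ => I) (b := p2) n2 (fun _ _ => I) hc'.
by exists c; split => //; split.
Qed.

Lemma KL d (z : cochain A T d.+1) : cnatural z -> (forall n x, z n (alpha n x) = 0%R) ->
  (forall n x, f d.+1 n (z n x) = 0%R) -> (forall n x, cdif A d.+1 n (z n x) = 0%R) ->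
  exists w : cochain A T d, cnatural w /\ (forall n x, w n (alpha n x) = 0%R) /\
    (forall n x, f d n (w n x) = 0%R) /\ (forall n x, cdif A d n (w n x) = z n x).
Proof.
move=> zn za zf zc.
have hs : forall n (y : gob (sgA A d.+1) n), Zp d.+1 n y -> exists x, PGK d n x /\ pd d n x = y.
  move=> n y [[_ h1] h2]; have [u [hu1 hu2]] := LA _ _ _ h2 h1.
  by exists u.
have a_nat : forall m n (g : Dmap m n) (x : S n), (0 : cob A d m)%R = gact (sgA A d) g (0 : cob A d n)%R.
  by move=> m n g x; rewrite (@gact0 (sgA A d)).
have a_P : forall n (x : S n), PGK d n 0%R by move=> n x; split => //; exact: f0.
have zQ : forall n x, Zp d.+1 n (z n x) by move=> n x; split; first split; [done | exact: zf | exact: zc].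
have ab : forall n x, pd d n 0%R = z n (alpha n x) by move=> n x; rewrite za /pd cdif0.
have [c [cn [cP [ca cp]]]] := RLthm (pdB d) (pdN d) (PGK_closed d) hs (Zcontr d) hinj
  (a := fun n _ => 0%R) a_nat a_P (b := z) zn zQ ab.
exists c; split => //; split => //; split => //.
by move=> n x; case: (cP n x).
Qed.

Lemma main : psurj (@gapmap A B f S T alpha) /\ quasi_iso (@gapmap A B f S T alpha).
Proof.
split; first exact: SUR.
split.
  move=> [|d] x [xn xc] hb'.
    move=> n t; apply: LA0; [exact: xc n t | exact: hb'.2 n t].
  case: hb' => [[p1 p2] [yin [e1 e2]]].
  have {}xc : forall n t, cdif A d.+1 n (x n t) = 0%R := xc.
  have [c [cn [c1 c2]]] := SUR _ _ yin.
  have {}c1 : forall n t, c n (alpha n t) = p1 n t := c1.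
  have {}c2 : forall n t, f d n (c n t) = p2 n t := c2.
  have {}e1 : forall n t, cdif A d n (p1 n t) = x n (alpha n t) := e1.
  have {}e2 : forall n t, cdif B d n (p2 n t) = f d.+1 n (x n t) := e2.
  pose z := fun n t => (x n t - cdif A d n (c n t))%R.
  have zn : cnatural z.
    by move=> m n g t; rewrite /z xn cn cdif_nat cact_sub.
  have za : forall n t, z n (alpha n t) = 0%R.
    by move=> n t; rewrite /z c1 -e1 subrr.
  have zf : forall n t, f d.+1 n (z n t) = 0%R.
    move=> n t; rewrite /z scf_sub scf_dif.
    by rewrite c2 e2 subrr.
  have zc : forall n t, cdif A d.+1 n (z n t) = 0%R.
    by move=> n t; rewrite /z cdif_sub cdif2 xc subrr.
  have [w [wn [wa [wf wc]]]] := KL _ _ zn za zf zc.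
  exists (fun n t => c n t + w n t)%R; split.
    by move=> m n g t; rewrite cn wn cactD.
  by move=> n t; rewrite /= cdifD wc /z addrC subrK.
move=> d [p1 p2] [[n1 [n2 hc']] hcy].
have [c [cn [c1 c2]]] := SUR _ (_,_) (conj n1 (conj n2 hc')).
have {}c1 : forall n t, c n (alpha n t) = p1 n t := c1.
have {}c2 : forall n t, f d n (c n t) = p2 n t := c2.
have [hcy1 hcy2] := hcy.
have {}hcy1 : forall n t, cdif A d n (p1 n t) = 0%R := hcy1.
have {}hcy2 : forall n t, cdif B d n (p2 n t) = 0%R := hcy2.
pose z := fun n t => cdif A d n (c n t).
have zn : cnatural z by move=> m n g t; rewrite /z cn cdif_nat.
have za : forall n t, z n (alpha n t) = 0%R.
  by move=> n t; rewrite /z c1 hcy1.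
have zf : forall n t, f d.+1 n (z n t) = 0%R.
  by move=> n t; rewrite /z scf_dif c2 hcy2.
have zc : forall n t, cdif A d.+1 n (z n t) = 0%R by move=> n t; rewrite /z cdif2.
have [w [wn [wa [wf wc]]]] := KL _ _ zn za zf zc.
exists (fun n t => c n t - w n t)%R; split.
  split; first by move=> m n g t; rewrite cn wn cact_sub.
  by move=> n t; rewrite /= cdif_sub wc subrr.
have e1 : forall n t, (c n (alpha n t) - w n (alpha n t) - p1 n t = 0)%R.
  by move=> n t; rewrite wa c1 subr0 subrr.
have e2 : forall n t, (f d n (c n t - w n t) - p2 n t = 0)%R.
  by move=> n t; rewrite scf_sub wf subr0 c2 subrr.
clear hcy; case: d p1 p2 n1 n2 hc' hcy1 hcy2 c cn c1 c2 z zn za zf zc w wn wa wf wc e1 e2 =>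
  [|d] p1 p2 n1 n2 hc' hcy1 hcy2 c cn c1 c2 z zn za zf zc w wn wa wf wc e1 e2.
  by split; [exact: e1 | exact: e2].
exists (fun n t => 0%R, fun n t => 0%R); split.
  split; first by move=> m n g t; rewrite cact0.
  split; first by move=> m n g t; rewrite cact0.
  by move=> n t; rewrite /ofSmap /precomp /= f0.
by split => n t /=; rewrite cdif0; [rewrite e1 | rewrite e2].
Qed.

End Fix.
End Main.

Unset Implicit Arguments.
Theorem lemma3p4p7 (A B : scx) (f : scmap A B) :
  (forall n, quasi_iso (@levelmap A B f n)) ->
  (forall S : sset, psurj (@ofSmap A B f S)) ->
  (forall d, scx_level_contractible A d /\ scx_level_contractible B d) ->
  forall (S T : sset) (alpha : smap S T), sinjective S T alpha ->
    psurj (@gapmap A B f S T alpha) /\ quasi_iso (@gapmap A B f S T alpha).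
Proof. move=> ha hb hc S T alpha hinj; exact: (main A B f ha hb hc S T alpha hinj). Qed.
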